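(* Let $k\ge2$ and $m\ge2$ be integers and put $n=m(k-1)$. Suppose $A(x)=\sum_{i=0}^{k-1}a_ix^i$ is a monic polynomial of degree $k-1$, $B$ is a polynomial, and $c\in\mathbb C$, $c\neq0$, are such that $$A(x)^m-c\,(x-1)=x^k B(x).$$ Then $A$ satisfies the differential equation $$m\,A'(x)\,(x-1)-A(x)=\big(m(k-1)-1\big)\,x^{k-1};$$ consequently its coefficients are given by $a_{k-1}=1$ and $a_i=\dfrac{m(i+1)}{mi-1}\,a_{i+1}$ for $0\le i\le k-2$. Moreover $c=-a_0^m$.
   Context: This is the normalization of the Davenport–Zannier pair $P=A^m$, $Q=x^kB$, $R=P-Q=c(x-1)$ for a weighted tree of diameter 4 (series $G$) whose central white vertex (at $0$) has degree $k$ and all black vertices have degree $m$. *)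

(* Defs.v *)
From HB Require Import structures.
From mathcomp Require Import all_boot all_order all_algebra.
Set Implicit Arguments. Unset Strict Implicit. Unset Printing Implicit Defensive.

(* Main.v *)
Require Import Defs.
From HB Require Import structures.
From mathcomp Require Import all_boot all_order all_algebra.
From mathcomp Require Import ring zify.
Import Order.TTheory GRing.Theory Num.Theory.
Local Open Scope ring_scope.

Theorem mainTheorem6 (C : numClosedFieldType) (k m : nat) (A B : {poly C}) (c : C) :
  (2 <= k)%N -> (2 <= m)%N ->
  A \is monic -> size A = k ->
  c != 0 ->
  A ^+ m - c *: ('X - 1) = 'X^k * B ->
  [/\ m%:R *: (A^`() * ('X - 1)) - A = ((m * (k - 1))%:R - 1) *: 'X^(k - 1),
      A`_(k - 1) = 1,
      (forall i : nat, (i <= k - 2)%N ->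
         A`_i = (m * (i + 1))%:R / ((m * i)%:R - 1) * A`_(i + 1))
    & c = - (A`_0 ^+ m)].
Proof.
case: k => [|[|K]] // _; case: m => [|[|M]] // _ => monA szA c0 E.
have E' : A ^+ M.+2 = c%:P * ('X - 1) + 'X^(K.+1) * 'X * B.
  by rewrite -exprSr -E mul_polyC addrC subrK.
have hc : c = - (A`_0 ^+ M.+2).
  have := congr1 (horner^~ 0) E'.
  rewrite hornerE /= !hornerE /= horner_coef0 => ->.
  by rewrite mulrN1 opprK.
have a0 : A`_0 != 0.
  apply/eqP => h; move: c0; rewrite hc h expr0n /= oppr0 eqxx //.
have cop : coprimep ('X^(K.+1)) (A ^+ M.+1).
  apply: coprimep_expl; apply: coprimep_expr.
  rewrite coprimep_sym -[X in coprimep _ X]subr0 -polyC0 coprimep_XsubC.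
  by rewrite rootE horner_coef0.
have dE := congr1 deriv E'.
rewrite deriv_exp !derivE /= in dE.
set D := M.+2%:R *: (A^`() * ('X - 1)) - A.
set Q := (B *+ K.+2 + 'X * B^`()) * ('X - 1) - 'X * B.
have key : A ^+ M.+1 * D = 'X^(K.+1) * Q.
  have -> : A ^+ M.+1 * D = (A^`() * A ^+ M.+1 *+ M.+2) * ('X - 1) - A ^+ M.+2.
    rewrite /D scaler_nat !exprS; move: (A ^+ M) (A^`()) => P Q1; ring.
  rewrite dE E' /Q exprS; ring.
have dv : 'X^(K.+1) %| D by rewrite -(Gauss_dvdpr _ cop) key dvdp_mulIl.
have Dlow : forall j, (j < K.+1)%N -> D`_j = 0.
  move=> j hj; case/dvdpP: dv => qq ->; by rewrite coefMXn hj.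
have hD : forall j, D`_j = M.+2%:R * (A`_j *+ j - A`_j.+1 *+ j.+1) - A`_j.
  move=> j; rewrite /D coefB coefZ mulrBr mulr1 coefB coefMX !coef_deriv.
  by case: j => [|j] //=.
have lc : A`_(K.+1) = 1.
  by have := monicP monA; rewrite lead_coefE szA.
have Ahi : forall j, (K.+2 <= j)%N -> A`_j = 0.
  by move=> j hj; rewrite nth_default // szA.
split.
- apply/polyP => j; rewrite coefZ coefXn subSS subn0.
  case: (ltngtP j K.+1) => hj.
  + by rewrite Dlow // mulr0.
  + by rewrite hD !Ahi ?(leqW hj) //  [0 *+ j]mul0rn [0 *+ j.+1]mul0rn subr0 mulr0 subr0 mulr0.
  + rewrite hj hD lc Ahi // [0 *+ _]mul0rn subr0 mulr1 natrM.
    done.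
- exact: lc.
- move=> i; rewrite subSS subn1 /= => hi.
  have h := Dlow i hi.
  rewrite hD in h.
  have nz : (M.+2 * i)%:R - 1 != 0 :> C.
    have h1 : (M.+2 * i)%:R != 1%:R :> C.
      rewrite eqr_nat; clear h; apply/eqP; case: i hi => [|i] _; lia.
    by rewrite subr_eq0.
  have hth : A`_i * ((M.+2 * i)%:R - 1) = (M.+2 * (i + 1))%:R * A`_(i + 1).
    have h2 : A`_i * ((M.+2 * i)%:R - 1) - (M.+2 * (i + 1))%:R * A`_(i + 1)
      = (M.+2%:R * (A`_i *+ i - A`_i.+1 *+ i.+1) - A`_i) :> C.
      rewrite -[A`_i *+ i]mulr_natr -[A`_i.+1 *+ i.+1]mulr_natr addn1 !natrM. ring.
    by apply/eqP; rewrite -subr_eq0 h2 h.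
  by rewrite mulrAC -hth mulfK.
- exact: hc.
Qed.
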